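(* Let $f_1,\dots,f_\Lambda$ be $\Lambda\ge2$ candidate models and let $\mathcal{A}$ be any deterministic pairwise comparison rule assigning to each pair $\{f,f'\}$ of distinct candidates one of them, $\mathcal{A}(f,f')\in\{f,f'\}$. Run the tournament procedure described in the context with $\mathcal{A}$. Then there are universal constants $0<c\le C$ such that the expected number of calls to $\mathcal{A}$ (expectation over the random pivot choices) lies between $c\Lambda$ and $C\Lambda$; i.e. it is $\Theta(\Lambda)$.
   Context: Tournament procedure (ATOMS): initialize $S=\{f_1,\dots,f_\Lambda\}$. While $|S|>1$: choose a pivot $f\in S$ uniformly at random (independently of the past); set $S'=\{f'\in S\setminus\{f\}:\mathcal{A}(f,f')=f'\}$ (this requires one call to $\mathcal{A}$ for each $f'\in S\setminus\{f\}$); if $S'=\emptyset$, output $f$ and stop; otherwise set $S\leftarrow S'$. If the loop ends with $|S|=1$, output the unique element of $S$. *)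

(* Defs.v *)
From mathcomp Require Import all_boot all_order all_algebra.
Set Implicit Arguments. Unset Strict Implicit. Unset Printing Implicit Defensive.
Import Order.TTheory GRing.Theory Num.Theory.
Local Open Scope ring_scope.

(* Candidates f_1..f_Lambda are the elements of 'I_L.
   A : 'I_L -> 'I_L -> 'I_L is the comparison rule; A f f' is the winner. *)

Definition comparison_rule (L : nat) (A : 'I_L -> 'I_L -> 'I_L) : Prop :=
  forall f f' : 'I_L, f != f' ->
    (A f f' == f) || (A f f' == f') /\ A f f' = A f' f.

Definition beaters (L : nat) (A : 'I_L -> 'I_L -> 'I_L) (f : 'I_L)
  (S : {set 'I_L}) : {set 'I_L} :=
  [set f' in S | (f' != f) && (A f f' == f')].

(* Expected number of further calls to A when the tournament is run from the
   current set S, with a fuel argument n (n = #|S| suffices since each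
   S' is a strict subset of S).  If |S| <= 1 the loop stops (0 calls);
   otherwise a uniform pivot f in S costs |S|-1 calls, and the procedure
   continues from S' (if S' is empty it stops, which is consistent since
   the cost from the empty set is 0). *)
Fixpoint exp_calls_fuel (R : numFieldType) (L : nat)
  (A : 'I_L -> 'I_L -> 'I_L) (n : nat) (S : {set 'I_L}) : R :=
  match n with
  | O => 0
  | n'.+1 =>
      if (#|S| <= 1)%N then 0
      else (#|S|.-1)%:R
           + (#|S|%:R)^-1 * \sum_(f in S) exp_calls_fuel R A n' (beaters A f S)
  end.

Definition expected_calls (R : numFieldType) (L : nat)
  (A : 'I_L -> 'I_L -> 'I_L) : R :=
  exp_calls_fuel R A L [set: 'I_L].

(* Main.v *)
Require Import Defs.
From mathcomp Require Import all_boot all_order all_algebra.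
From mathcomp Require Import reals.
From mathcomp Require Import lra.
Import Order.TTheory GRing.Theory Num.Theory.
Local Open Scope ring_scope.
Set Implicit Arguments. Unset Strict Implicit.

Lemma card_beaters L (A : 'I_L -> 'I_L -> 'I_L) f S :
  #|beaters A f S| = (\sum_(g in S) ((g != f) && (A f g == g) : nat))%N.
Proof.
rewrite -sum1_card /beaters big_mkcond [RHS]big_mkcond /=.
by apply: eq_bigr => g _; rewrite inE; case: (g \in S); case: (g != f); case: (A f g == g).
Qed.

Lemma card_neq L (S : {set 'I_L}) f : f \in S ->
  (\sum_(g in S) (g != f : nat))%N = #|S|.-1.
Proof.
move=> fS; rewrite (cardsD1 f S) fS add1n /= -sum1_card.
rewrite (bigD1 f fS) /= eqxx add0n big_mkcond [RHS]big_mkcond /=.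
apply: eq_bigr => g _; rewrite in_setD1; case: (g == f) => /=; rewrite ?andbF ?andbT //; by case: (g \in S).
Qed.

Lemma sum_beaters L (A : 'I_L -> 'I_L -> 'I_L) (S : {set 'I_L}) :
  (forall f g, f != g -> A f g = A g f) ->
  (2 * \sum_(f in S) #|beaters A f S| <= #|S| * #|S|.-1)%N.
Proof.
move=> sym.
rewrite (eq_bigr _ (fun f _ => card_beaters A f S)).
rewrite mul2n -addnn.
rewrite [X in (X + _ <= _)%N]exchange_big /= -big_split /=.
rewrite -sum_nat_const.
apply: leq_sum => f fS; rewrite -big_split /= -(card_neq fS).
apply: leq_sum => g gS.
case: eqP => [->|/eqP nfg]; first by rewrite eqxx.
rewrite (eq_sym g f) nfg /= (sym g f); last by rewrite eq_sym.
case: eqP => [e1|]; case: eqP => [e2|] //=; by move: nfg; rewrite -e1 e2 eqxx. Qed.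

Lemma ecf_ge0 (R : realType) L (A : 'I_L -> 'I_L -> 'I_L) n (S : {set 'I_L}) :
  0 <= exp_calls_fuel R A n S.
Proof.
elim: n S => [|n IH] S //=; case: ifP => // _.
apply: addr_ge0 => //; apply: mulr_ge0; first by rewrite invr_ge0.
by apply: sumr_ge0 => f _.
Qed.

Lemma ecf_le (R : realType) L (A : 'I_L -> 'I_L -> 'I_L) n (S : {set 'I_L}) :
  (forall f g, f != g -> A f g = A g f) ->
  exp_calls_fuel R A n S <= 2 * #|S|%:R.
Proof.
move=> sym; elim: n S => [|n IH] S /=; first by rewrite mulr_ge0.
case: ifP => [_|/negbT]; first by rewrite mulr_ge0.
rewrite -ltnNge => S2.
have kpos : (0 < #|S|%:R :> R) by rewrite ltr0n (ltn_trans _ S2).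
apply: (@le_trans _ _ ((#|S|.-1)%:R + (#|S|%:R)^-1 * (2 * (\sum_(f in S) #|beaters A f S|)%:R))).
  rewrite lerD2l ler_wpM2l ?invr_ge0 ?ler0n // natr_sum mulr_sumr.
  by apply: ler_sum => f _; apply: IH.
have H := sum_beaters S sym.
have H' : (2 * (\sum_(f in S) #|beaters A f S|)%:R <= (#|S| * #|S|.-1)%:R :> R).
  by rewrite -(natrM R 2) ler_nat.
apply: (@le_trans _ _ ((#|S|.-1)%:R + (#|S|%:R)^-1 * (#|S| * #|S|.-1)%:R)).
  by rewrite lerD2l ler_wpM2l ?invr_ge0 ?ler0n.
rewrite natrM mulrA mulVf ?gt_eqF // mul1r.
have : ((#|S|.-1)%:R <= #|S|%:R :> R) by rewrite ler_nat leq_pred.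
move=> h; rewrite mulr2n mulrDl mul1r; exact: lerD.
Qed.

Theorem mainTheorem2 (R : realType) :
  exists c C : R, 0 < c /\ c <= C /\
    forall (L : nat) (A : 'I_L -> 'I_L -> 'I_L),
      (2 <= L)%N -> comparison_rule A ->
      c * L%:R <= expected_calls R A /\ expected_calls R A <= C * L%:R.
Proof.
exists (2^-1), 2; split; first lra.
split; first lra.
move=> L A L2 cr.
have sym : forall f g, f != g -> A f g = A g f by move=> f g /cr [].
split; last first.
  by rewrite /expected_calls; have := ecf_le R L [set: 'I_L] sym; rewrite cardsT card_ord.
rewrite /expected_calls; case: L A L2 cr sym => [|L] A L2 cr sym //=.
rewrite cardsT card_ord ifF; last by rewrite leqNgt L2.
apply: (@le_trans _ _ (L%:R)); last first.
  rewrite -[X in X <= _]addr0 lerD2l mulr_ge0 ?invr_ge0 ?ler0n //.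
  by apply: sumr_ge0 => f _; apply: ecf_ge0.
have : (1 <= L%:R :> R) by rewrite ler1n.
move=> h; have -> : (L.+1%:R : R) = L%:R + 1 by rewrite natr1. lra.
Qed.
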